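(* Let $A\in\mathbb{C}^{n\times n}$ be Hermitian, $\beta>0$, $f(\mathbf{z})=\frac12\mathbf{z}^*A\mathbf{z}+\frac{\beta}{2}\sum_k|z_k|^4$, and let $\mathbf{z}\in\mathbb{CS}^{n-1}$ be a stationary point of $\min_{\mathbf{z}\in\mathbb{CS}^{n-1}}f(\mathbf{z})$. Then $\mathbf{z}$ is a global minimizer of $f$ on $\mathbb{CS}^{n-1}$ if and only if (i) $H_f(\mathbf{z})[\mathbf{v}]\ge0$ and $2H_3(\mathbf{v})^2\le H_f(\mathbf{z})[\mathbf{v}]\cdot[f(\mathbf{v})-f(\mathbf{z})]$ for all $\mathbf{v}\in\mathcal{T}_{\mathbf{z}}\cap\mathbb{CS}^{n-1}$, and (ii) $H_3(\mathbf{v})=0$ and $H_4(\mathbf{v})\ge0$ for all $\mathbf{v}\in\mathcal{T}_{\mathbf{z}}\cap\mathbb{CS}^{n-1}$ with $H_f(\mathbf{z})[\mathbf{v}]=0$.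
   Context: $\mathbb{CS}^{n-1}$ is the unit sphere of $\mathbb{C}^n$. Stationarity means $[A+2\beta\,\mathrm{diag}(|\mathbf{z}|^2)]\mathbf{z}=2\lambda\mathbf{z}$ with $\lambda=\frac12\mathbf{z}^*A\mathbf{z}+\beta\|\mathbf{z}\|_4^4$, where $|\mathbf{z}|^2=(|z_1|^2,\dots,|z_n|^2)$. $\mathcal{T}_{\mathbf{z}}=\{\mathbf{v}\in\mathbb{C}^n:\mathrm{Re}(\mathbf{v}^*\mathbf{z})=0\}$. $H_f(\mathbf{z})[\mathbf{v}]=\mathbf{v}^*[A+2\beta\,\mathrm{diag}(|\mathbf{z}|^2)-2\lambda I]\mathbf{v}+4\beta\sum_k\mathrm{Re}(v_k\bar z_k)^2$, $H_3(\mathbf{v})=\beta\sum_k(|v_k|^2-|z_k|^2)\mathrm{Re}(\bar z_kv_k)$, $H_4(\mathbf{v})=\beta\sum_k[(|v_k|^2-|z_k|^2)^2-4\mathrm{Re}(\bar z_kv_k)^2]$. *)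

(* Defs.v *)
From HB Require Import structures.
From mathcomp Require Import all_boot all_order all_algebra.
From mathcomp Require Import complex.
Set Implicit Arguments. Unset Strict Implicit. Unset Printing Implicit Defensive.
Import Order.TTheory GRing.Theory Num.Theory.
Local Open Scope ring_scope.
Local Open Scope complex_scope.

Section Defs.
Variables (R : rcfType) (n : nat).
Implicit Types (A : 'M[R[i]]_n) (z v : 'cV[R[i]]_n).

Definition hermitian_mx A : Prop := map_mx (@conjc R) A^T = A.

Definition qform A v : R[i] := ((map_mx (@conjc R) v^T) *m A *m v) 0 0.

Definition abs2 (x : R[i]) : R := complex.Re x ^+ 2 + complex.Im x ^+ 2.

Definition norm2sq z : R := \sum_k abs2 (z k 0).
Definition norm4p4 z : R := \sum_k abs2 (z k 0) ^+ 2.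

Definition on_sphere z : Prop := norm2sq z = 1.

(* f(z) = 1/2 z^* A z + beta/2 sum |z_k|^4 ; z^*Az is real for Hermitian A,
   so we take its real part to obtain a real-valued f. *)
Definition fobj A (beta : R) z : R := 2^-1 * complex.Re (qform A z) + beta / 2 * norm4p4 z.

Definition lam A (beta : R) z : R := 2^-1 * complex.Re (qform A z) + beta * norm4p4 z.

Definition diag_abs2 z : 'M[R[i]]_n := \matrix_(i, j) ((i == j)%:R * (abs2 (z i 0))%:C).

Definition stationary A (beta : R) z : Prop :=
  (A + (2 * beta)%:C *: diag_abs2 z) *m z = (2 * lam A beta z)%:C *: z.

Definition tangent z v : Prop := complex.Re (\sum_k (v k 0)^* * z k 0) = 0.

Definition Hf A (beta : R) z v : R :=
  complex.Re (qform (A + (2 * beta)%:C *: diag_abs2 z - (2 * lam A beta z)%:C%:M) v)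
  + 4 * beta * \sum_k complex.Re (v k 0 * (z k 0)^*) ^+ 2.

Definition H3 (beta : R) z v : R :=
  beta * \sum_k (abs2 (v k 0) - abs2 (z k 0)) * complex.Re ((z k 0)^* * v k 0).

Definition H4 (beta : R) z v : R :=
  beta * \sum_k ((abs2 (v k 0) - abs2 (z k 0)) ^+ 2 - 4 * complex.Re ((z k 0)^* * v k 0) ^+ 2).

Definition global_min A (beta : R) z : Prop :=
  on_sphere z /\ forall w, on_sphere w -> fobj A beta z <= fobj A beta w.

End Defs.

(* Main.v *)
Require Import Defs.
From HB Require Import structures.
From mathcomp Require Import all_boot all_order all_algebra.
From mathcomp Require Import complex.
From mathcomp Require Import ring lra.
Import Order.TTheory GRing.Theory Num.Theory.
Local Open Scope ring_scope.
Local Open Scope complex_scope.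

Lemma qformE (R : rcfType) n (A : 'M[R[i]]_n) (x : 'cV[R[i]]_n) :
  qform A x = \sum_i \sum_j (x i 0)^* * A i j * x j 0.
Proof.
rewrite /qform !mxE. under eq_bigr do rewrite mxE big_distrl /=.
rewrite exchange_big /=. apply: eq_bigr => i _; apply: eq_bigr => j _.
by rewrite !mxE.
Qed.

Lemma sum_kron (R : pzRingType) n (F : 'I_n -> R) i : \sum_j ((i == j)%:R * F j) = F i.
Proof.
rewrite (bigD1 i) //= eqxx mul1r big1 ?addr0 // => j /negbTE.
by rewrite eq_sym => ->; rewrite mul0r.
Qed.

Lemma ReJ (R : rcfType) (x : R[i]) : complex.Re (x^*) = complex.Re x.
Proof. by case: x. Qed.
Lemma ReMr (R : rcfType) (x : R[i]) (a:R) : complex.Re (a%:C * x) = a * complex.Re x.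
Proof. case: x => c d /=. ring. Qed.
Lemma ReJM (R : rcfType) (x y : R[i]) : complex.Re (x^* * y) = complex.Re x * complex.Re y + complex.Im x * complex.Im y.
Proof. case: x => a b; case: y => c d /=. ring. Qed.
Lemma ReMJ (R : rcfType) (x y : R[i]) : complex.Re (x * y^*) = complex.Re x * complex.Re y + complex.Im x * complex.Im y.
Proof. case: x => a b; case: y => c d /=. ring. Qed.
Lemma abs2E (R : rcfType) (x y : R[i]) (a b : R) : abs2 (a%:C * x + b%:C * y) = a^+2 * abs2 x + 2 * a * b * complex.Re (x^* * y) + b^+2 * abs2 y.
Proof. case: x => c d; case: y => e f; rewrite /abs2 /=. ring. Qed.
Lemma ReJMabs (R : rcfType) (x : R[i]) (a : R) : complex.Re (x^* * a%:C * x) = a * abs2 x.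
Proof. case: x => c d; rewrite /abs2 /=. ring. Qed.

Lemma sum_kron2 (R : pzRingType) n (F : 'I_n -> 'I_n -> R) :
  \sum_i \sum_j ((i == j)%:R * F i j) = \sum_i F i i.
Proof. by apply: eq_bigr => i _; rewrite (@sum_kron _ _ (F i)). Qed.

Lemma cR (R : rcfType) (a : R) : (a%:C)^* = a%:C.
Proof. by rewrite /conjc /= oppr0. Qed.

Lemma cjD (R : rcfType) (x y : R[i]) : @conjc R (x + y) = conjc x + conjc y.
Proof. by case: x => a b; case: y => c d; rewrite /= opprD. Qed.
Lemma cjM (R : rcfType) (x y : R[i]) : @conjc R (x * y) = conjc x * conjc y.
Proof. case: x => a b; case: y => c d; apply/eqP; rewrite eq_complex /=; apply/andP; split; apply/eqP; ring. Qed.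
Lemma cjR (R : rcfType) (a : R) : @conjc R (a%:C) = a%:C.
Proof. by rewrite /conjc /= oppr0. Qed.

Lemma NcR (R : rcfType) (a : R) : Num.conj (a%:C : R[i]) = a%:C.
Proof. by rewrite /Num.conj /= oppr0. Qed.

Lemma herm_cross (R : rcfType) n (A : 'M[R[i]]_n) (x y : 'cV[R[i]]_n) : hermitian_mx A ->
  (\sum_i \sum_j (x i 0)^* * A i j * y j 0)^* = \sum_i \sum_j (y i 0)^* * A i j * x j 0.
Proof.
move=> hA. rewrite rmorph_sum /=. under eq_bigr do rewrite rmorph_sum /=.
rewrite exchange_big /=. apply: eq_bigr => i _; apply: eq_bigr => j _.
have hji : (A j i)^* = A i j by rewrite -[in RHS]hA !mxE.
rewrite !rmorphM /= conjcK hji. ring.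
Qed.

Lemma qform_comb (R : rcfType) n (A : 'M[R[i]]_n) (z v : 'cV[R[i]]_n) (c s : R) : hermitian_mx A ->
  complex.Re (qform A (c%:C *: z + s%:C *: v)) =
  c^+2 * complex.Re (qform A z) + 2 * c * s * complex.Re (\sum_i \sum_j (v i 0)^* * A i j * z j 0)
  + s^+2 * complex.Re (qform A v).
Proof.
move=> hA. rewrite !qformE.
have -> : \sum_i \sum_j ((c%:C *: z + s%:C *: v) i 0)^* * A i j * (c%:C *: z + s%:C *: v) j 0
  = (c^+2)%:C * (\sum_i \sum_j (z i 0)^* * A i j * z j 0)
    + (c*s)%:C * (\sum_i \sum_j (z i 0)^* * A i j * v j 0)
    + (c*s)%:C * (\sum_i \sum_j (v i 0)^* * A i j * z j 0)
    + (s^+2)%:C * (\sum_i \sum_j (v i 0)^* * A i j * v j 0).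
  rewrite !mulr_sumr -!big_split /=; apply: eq_bigr => i _.
  rewrite !mulr_sumr -!big_split /=; apply: eq_bigr => j _.
  rewrite !mxE; case: (z i 0) => a1 b1; case: (v i 0) => a2 b2; case: (z j 0) => a3 b3;
  case: (v j 0) => a4 b4; case: (A i j) => a5 b5.
  apply/eqP; rewrite eq_complex /=; apply/andP; split; apply/eqP; ring.
rewrite -(@herm_cross _ _ _ v z hA) !raddfD /= !ReMr ReJ. ring.
Qed.

Lemma stat_row (R : rcfType) n (A : 'M[R[i]]_n) beta (z : 'cV[R[i]]_n) i :
  stationary A beta z ->
  \sum_j A i j * z j 0 = (2 * lam A beta z)%:C * z i 0 - (2 * beta)%:C * (abs2 (z i 0))%:C * z i 0.
Proof.
move=> hs; have e := congr1 (fun M : 'cV[R[i]]_n => M i 0) hs; rewrite /= !mxE in e.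
have h2 : \sum_j (A + (2 * beta)%:C *: diag_abs2 z) i j * z j 0 =
   \sum_j A i j * z j 0 + \sum_j ((i == j)%:R * ((2 * beta)%:C * (abs2 (z i 0))%:C * z j 0)).
  rewrite -big_split /=; apply: eq_bigr => j _; rewrite !mxE. ring.
by rewrite h2 sum_kron in e; rewrite -e addrK.
Qed.

Lemma cross_stat (R : rcfType) n (A : 'M[R[i]]_n) beta (z v : 'cV[R[i]]_n) :
  stationary A beta z ->
  complex.Re (\sum_i \sum_j (v i 0)^* * A i j * z j 0) =
  2 * lam A beta z * complex.Re (\sum_k (v k 0)^* * z k 0)
  - 2 * beta * \sum_k abs2 (z k 0) * complex.Re ((z k 0)^* * v k 0).
Proof.
move=> hs.
have -> : \sum_i \sum_j (v i 0)^* * A i j * z j 0 = \sum_i (v i 0)^* * \sum_j A i j * z j 0.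
  apply: eq_bigr => i _; rewrite mulr_sumr; apply: eq_bigr => j _; by rewrite mulrA.
under eq_bigr do rewrite (@stat_row _ _ A beta z _ hs).
rewrite !raddf_sum /= !mulr_sumr -sumrB; apply: eq_bigr => i _.
case: (v i 0) => a b; case: (z i 0) => c d; rewrite /abs2 /=. ring.
Qed.

Lemma Hf_expand (R : rcfType) n (A : 'M[R[i]]_n) beta (z v : 'cV[R[i]]_n) :
  Hf A beta z v = complex.Re (qform A v) + 2 * beta * \sum_k abs2 (z k 0) * abs2 (v k 0)
    - 2 * lam A beta z * norm2sq v + 4 * beta * \sum_k complex.Re ((z k 0)^* * v k 0) ^+ 2.
Proof.
rewrite /Hf /norm2sq.
have -> : qform (A + (2 * beta)%:C *: diag_abs2 z - (2 * lam A beta z)%:C%:M) v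
  = qform A v + (\sum_i \sum_j ((i == j)%:R * ((v i 0)^* * ((2 * beta)%:C * (abs2 (z i 0))%:C) * v j 0)))
    - (\sum_i \sum_j ((i == j)%:R * ((v i 0)^* * (2 * lam A beta z)%:C * v j 0))).
  rewrite !qformE.
  rewrite -big_split -sumrB /=; apply: eq_bigr => i _.
  rewrite -big_split -sumrB /=; apply: eq_bigr => j _.
  rewrite !mxE -mulr_natr. ring.
rewrite raddfB raddfD /=.
rewrite !sum_kron2.
have e1 : complex.Re (\sum_i (v i 0)^* * ((2 * beta)%:C * (abs2 (z i 0))%:C) * v i 0)
   = 2 * beta * \sum_k abs2 (z k 0) * abs2 (v k 0).
  rewrite raddf_sum mulr_sumr; apply: eq_bigr => k _.
  case: (v k 0) => a b; case: (z k 0) => c d; rewrite /abs2 /=. ring.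
have e2 : complex.Re (\sum_i (v i 0)^* * (2 * lam A beta z)%:C * v i 0)
   = 2 * lam A beta z * \sum_k abs2 (v k 0).
  rewrite raddf_sum mulr_sumr; apply: eq_bigr => k _.
  case: (v k 0) => a b; rewrite /abs2 /=. ring.
have e3 : \sum_k complex.Re (v k 0 * (z k 0)^*) ^+ 2 = \sum_k complex.Re ((z k 0)^* * v k 0) ^+ 2.
  apply: eq_bigr => k _; case: (v k 0) => a b; case: (z k 0) => c d; rewrite /=. congr (_ ^+ 2); ring.
by rewrite e1 e2 e3.
Qed.

Lemma norm4_comb (R : rcfType) n (z v : 'cV[R[i]]_n) (c s : R) :
  norm4p4 (c%:C *: z + s%:C *: v) =
  c^+4 * norm4p4 z + 4 * c^+2 * s^+2 * \sum_k complex.Re ((z k 0)^* * v k 0) ^+ 2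
  + s^+4 * norm4p4 v + 4 * c^+3 * s * \sum_k abs2 (z k 0) * complex.Re ((z k 0)^* * v k 0)
  + 2 * c^+2 * s^+2 * \sum_k abs2 (z k 0) * abs2 (v k 0)
  + 4 * c * s^+3 * \sum_k complex.Re ((z k 0)^* * v k 0) * abs2 (v k 0).
Proof.
rewrite /norm4p4 !mulr_sumr -!big_split /=; apply: eq_bigr => k _.
rewrite !mxE; case: (v k 0) => a b; case: (z k 0) => e d; rewrite /abs2 /=. ring.
Qed.

Lemma norm2_comb (R : rcfType) n (z v : 'cV[R[i]]_n) (c s : R) :
  norm2sq (c%:C *: z + s%:C *: v) =
  c^+2 * norm2sq z + 2 * c * s * complex.Re (\sum_k (v k 0)^* * z k 0) + s^+2 * norm2sq v.
Proof.
rewrite /norm2sq raddf_sum !mulr_sumr -!big_split /=; apply: eq_bigr => k _.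
rewrite !mxE; case: (v k 0) => a b; case: (z k 0) => e d; rewrite /abs2 /=. ring.
Qed.

Lemma H3_expand (R : rcfType) n beta (z v : 'cV[R[i]]_n) :
  H3 beta z v = beta * (\sum_k complex.Re ((z k 0)^* * v k 0) * abs2 (v k 0)
      - \sum_k abs2 (z k 0) * complex.Re ((z k 0)^* * v k 0)).
Proof.
rewrite /H3 -sumrB; congr (_ * _); apply: eq_bigr => k _.
case: (v k 0) => a b; case: (z k 0) => e d; rewrite /abs2 /=. ring.
Qed.

Lemma H4_expand (R : rcfType) n beta (z v : 'cV[R[i]]_n) :
  H4 beta z v = beta * (norm4p4 v - 2 * \sum_k abs2 (z k 0) * abs2 (v k 0) + norm4p4 z
     - 4 * \sum_k complex.Re ((z k 0)^* * v k 0) ^+ 2).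
Proof.
rewrite /H4 /norm4p4; congr (_ * _).
transitivity (\sum_k (abs2 (v k 0) ^+ 2 - 2 * (abs2 (z k 0) * abs2 (v k 0)) + abs2 (z k 0) ^+ 2 - 4 * complex.Re ((z k 0)^* * v k 0) ^+ 2)).
  by apply: eq_bigr => k _; ring.
by rewrite !sumrB big_split sumrB /= -!mulr_sumr.
Qed.

Lemma Id (R : rcfType) n (A : 'M[R[i]]_n) beta (z v : 'cV[R[i]]_n) (c s : R) :
  hermitian_mx A -> stationary A beta z -> tangent z v -> on_sphere v -> c^+2 + s^+2 = 1 ->
  fobj A beta (c%:C *: z + s%:C *: v) - fobj A beta z =
  s^+2 * (c^+2 * (Hf A beta z v / 2) + 2 * c * s * H3 beta z v + s^+2 * (fobj A beta v - fobj A beta z)).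
Proof.
move=> hA hs ht hv hcs.
rewrite Hf_expand H3_expand /fobj (@qform_comb _ _ A z v c s hA) (@cross_stat _ _ A beta z v hs) norm4_comb.
rewrite /tangent in ht; rewrite ht; rewrite /on_sphere in hv; rewrite hv /lam.
set Qz := complex.Re (qform A z); set Qv := complex.Re (qform A v).
set T1 := norm4p4 z; set T3 := norm4p4 v.
set T2 := \sum_k _ ^+ 2.
set T4 := \sum_k abs2 (z k 0) * _.
set T5 := \sum_k abs2 (z k 0) * abs2 (v k 0).
set T6 := \sum_k _ * abs2 (v k 0).
transitivity (2^-1 *
  (c ^+ 2 * Qz + 2 * c * s * (2 * (2^-1 * Qz + beta * T1) * 0 - 2 * beta * T4) + s ^+ 2 * Qv) * (c^+2 + s^+2) +
  beta / 2 * (c ^+ 4 * T1 + 4 * c ^+ 2 * s ^+ 2 * T2 + s ^+ 4 * T3 + 4 * c ^+ 3 * s * T4 +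
   2 * c ^+ 2 * s ^+ 2 * T5 + 4 * c * s ^+ 3 * T6) - (2^-1 * Qz + beta / 2 * T1) * (c^+2 + s^+2)^+2).
  by rewrite hcs expr1n !mulr1.
by field.
Qed.
Lemma L2 (R : realFieldType) (a b d c s : R) : 0 <= a -> 0 <= d -> b^+2 <= 4 * a * d ->
  0 <= a * c^+2 + b * c * s + d * s^+2.
Proof.
move=> ha hd hb.
have [a0|apos] := eqVneq a 0.
  have b0 : b = 0.
    have : b^+2 <= 0 by move: hb; rewrite a0 mulr0 mul0r.
    by move=> h; apply/eqP; rewrite -sqrf_eq0 eq_le h sqr_ge0.
  rewrite a0 b0 !mul0r !add0r; exact: mulr_ge0 hd (sqr_ge0 s).
have ap : 0 < a by rewrite lt_def apos ha.
have e : 4 * a * (a * c^+2 + b * c * s + d * s^+2) = (2*a*c + b*s)^+2 + (4*a*d - b^+2) * s^+2 by ring.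
have h1 : 0 <= (2*a*c + b*s)^+2 + (4*a*d - b^+2) * s^+2.
  apply: addr_ge0; first exact: sqr_ge0.
  apply: mulr_ge0; [by rewrite subr_ge0 | exact: sqr_ge0].
rewrite -e in h1.
have h4a : 0 < 4 * a by apply: mulr_gt0.
by rewrite pmulr_rge0 in h1.
Qed.

Lemma L1 (R : realFieldType) (a b d : R) :
  (forall t, t != 0 -> 0 <= a + b * t + d * t^+2) -> [/\ 0 <= a, 0 <= d & b^+2 <= 4 * a * d].
Proof.
move=> H.
have hd : 0 <= d.
  rewrite leNgt; apply/negP => dn.
  set t := (`|a| + `|b|) / (- d) + 1.
  have ht1 : 1 <= t by rewrite lerDr divr_ge0 // ?addr_ge0 // oppr_ge0 ltW.
  have hdt : d * t = - (`|a| + `|b|) + d.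
    by rewrite /t; field; rewrite lt_eqF.
  have := H t; rewrite gt_eqF ?(lt_le_trans ltr01 ht1) //.
  move=> /(_ isT) hq.
  have e : a + b * t + d * t^+2 = a + b * t + t * (d * t) by ring.
  rewrite e hdt in hq.
  have hb : b * t <= `|b| * t by rewrite ler_wpM2r ?ler_norm // (le_trans ler01 ht1).
  have ha1 : a <= `|a| by exact: ler_norm.
  have ha2 : `|a| <= `|a| * t by rewrite ler_peMr.
  nra.
have ha : 0 <= a.
  rewrite leNgt; apply/negP => an.
  set K := `|b| + `|d|.
  have hK : 0 <= K by rewrite addr_ge0.
  have hKa : 0 < K - a by rewrite subr_gt0 (lt_le_trans an).
  set t := - a / (K - a).
  have ht0 : 0 < t by rewrite divr_gt0 // oppr_gt0.
  have ht1 : t <= 1 by rewrite ler_pdivrMr // mul1r; lra.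
  have htK : t * (K - a) = - a by rewrite /t; field; rewrite gt_eqF.
  have hq := H t (lt0r_neq0 ht0).
  have hb : b * t <= `|b| * t by rewrite ler_wpM2r ?ler_norm // ltW.
  have hd2 : d * t^+2 <= `|d| * t.
    have : d * t^+2 <= `|d| * t^+2 by rewrite ler_wpM2r ?ler_norm // sqr_ge0.
    have : t^+2 <= t by rewrite expr2 ler_piMl // ltW.
    move=> h1 h2; apply: (le_trans h2); rewrite ler_wpM2l //.
  have : t * a < 0 by rewrite pmulr_rlt0.
  rewrite /K in htK; nra.
split=> //.
have [d0|dpos] := eqVneq d 0.
  rewrite d0 mulr0.
  have [b0|bn0] := eqVneq b 0; first by rewrite b0 expr0n.
  exfalso.
  set t := - (a + 1) / b.
  have hbt : b * t = - (a + 1) by rewrite /t mulrC -mulrA mulVf ?mulr1.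
  have tn0 : t != 0.
    apply/eqP => t0; move: hbt; rewrite t0 mulr0 => /eqP; rewrite eq_sym oppr_eq0.
    by rewrite gt_eqF // ltr_wpDl.
  have hq := H t tn0; rewrite d0 mul0r addr0 hbt in hq; lra.
have [b0|bn0] := eqVneq b 0.
  by rewrite b0 expr0n /= mulr_ge0 // mulr_ge0.
set t := - b / (2 * d).
have hdt : 2 * d * t = - b by rewrite /t; field.
have tn0 : t != 0.
  apply/eqP => t0; move: hdt; rewrite t0 mulr0 => /eqP; rewrite eq_sym oppr_eq0.
  by rewrite (negbTE bn0).
have hq := H t tn0.
have e2 : 4 * d * (a + b*t + d*t^+2) = 4*a*d - b^+2.
  have -> : 4 * d * (a + b*t + d*t^+2) = 4*a*d + 2*b*(2*d*t) + (2*d*t)^+2 by ring.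
  rewrite hdt; ring.
have := mulr_ge0 hd hq.
have : 0 <= 4 * d * (a + b*t + d*t^+2) by apply: mulr_ge0 => //; apply: mulr_ge0.
rewrite e2; lra.
Qed.

Lemma cv_eq (R : Type) n (u v : 'cV[R]_n) : (forall i, u i 0 = v i 0) -> u = v.
Proof. by move=> h; apply/matrixP => i j; rewrite (ord1 j). Qed.

Lemma DHf (R : rcfType) n (A : 'M[R[i]]_n) beta (z v : 'cV[R[i]]_n) :
  on_sphere v -> fobj A beta v - fobj A beta z = (Hf A beta z v + H4 beta z v) / 2.
Proof. move=> hv; rewrite /on_sphere in hv. rewrite Hf_expand H4_expand /fobj /lam hv. by field. Qed.

Lemma f_scale (R : rcfType) n (A : 'M[R[i]]_n) beta (z v : 'cV[R[i]]_n) (c : R) :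
  hermitian_mx A -> c^+2 = 1 -> fobj A beta (c%:C *: z + 0%:C *: v) = fobj A beta z.
Proof.
move=> hA hc; have c4 : c^+4 = 1 by rewrite (_ : 4 = 2 * 2)%N // exprM hc expr1n.
rewrite /fobj (@qform_comb _ _ A z v c 0 hA) norm4_comb hc c4. ring.
Qed.

Lemma tangent_comb (R : rcfType) n (z x y : 'cV[R[i]]_n) (c s : R) :
  complex.Re (\sum_k ((c%:C *: x + s%:C *: y) k 0)^* * z k 0) =
  c * complex.Re (\sum_k (x k 0)^* * z k 0) + s * complex.Re (\sum_k (y k 0)^* * z k 0).
Proof.
rewrite !raddf_sum !mulr_sumr -big_split /=; apply: eq_bigr => k _.
rewrite !mxE; case: (x k 0) => a b; case: (y k 0) => e d; case: (z k 0) => g h /=. ring.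
Qed.

Lemma ReSumJ (R : rcfType) n (x y : 'cV[R[i]]_n) :
  complex.Re (\sum_k (x k 0)^* * y k 0) = complex.Re (\sum_k (y k 0)^* * x k 0).
Proof.
rewrite !raddf_sum; apply: eq_bigr => k _.
case: (x k 0) => a b; case: (y k 0) => e d /=. ring.
Qed.

Lemma norm2_eq0 (R : rcfType) n (u : 'cV[R[i]]_n) : norm2sq u = 0 -> u = 0.
Proof.
move=> h; apply/matrixP => i j; rewrite (ord1 j) mxE.
have hi := psumr_eq0P (fun k _ => addr_ge0 (sqr_ge0 (complex.Re (u k 0))) (sqr_ge0 (complex.Im (u k 0)))) h.
have := hi i isT; rewrite /abs2; case: (u i 0) => a b /= e.
have a0 : a = 0 by nra.
have b0 : b = 0 by nra.
by rewrite a0 b0.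
Qed.

Theorem theorem3 (R : rcfType) (n : nat) (A : 'M[R[i]]_n) (beta : R)
  (z : 'cV[R[i]]_n) :
  hermitian_mx A -> 0 < beta -> on_sphere z -> stationary A beta z ->
  global_min A beta z <->
   (forall v, tangent z v -> on_sphere v ->
       0 <= Hf A beta z v /\
       2 * H3 beta z v ^+ 2 <= Hf A beta z v * (fobj A beta v - fobj A beta z)) /\
   (forall v, tangent z v -> on_sphere v -> Hf A beta z v = 0 ->
       H3 beta z v = 0 /\ 0 <= H4 beta z v).
Proof.
move=> hA hb hz hs; split.
  move=> [_ hmin].
  have key : forall v, tangent z v -> on_sphere v ->
      [/\ 0 <= Hf A beta z v / 2, 0 <= fobj A beta v - fobj A beta z &
          (2 * H3 beta z v)^+2 <= 4 * (Hf A beta z v / 2) * (fobj A beta v - fobj A beta z)].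
    move=> v ht hv; apply: L1 => t tn0.
    have h1 : 0 <= 1 + t^+2 by rewrite addr_ge0 // sqr_ge0.
    set r := Num.sqrt (1 + t^+2).
    have hr2 : r^+2 = 1 + t^+2 by rewrite sqr_sqrtr.
    have hr : 0 < r by rewrite sqrtr_gt0 ltr_pwDl // sqr_ge0.
    have rn0 : r != 0 by rewrite gt_eqF.
    set c := r^-1; set s := t / r.
    have hcs : c^+2 + s^+2 = 1.
      have -> : c^+2 + s^+2 = (1 + t^+2) / r^+2 by rewrite /c /s; field.
      by rewrite hr2 divff // gt_eqF // ltr_pwDl // sqr_ge0.
    have hw : on_sphere (c%:C *: z + s%:C *: v).
      rewrite /on_sphere norm2_comb hz; rewrite /tangent in ht; rewrite ht; rewrite /on_sphere in hv.
      by rewrite hv mulr0 addr0 !mulr1.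
    have := hmin _ hw; rewrite -subr_ge0 (@Id _ _ A beta z v c s hA hs ht hv hcs) => hq.
    have hs2 : 0 < s^+2 by rewrite exprn_even_gt0 //= mulf_neq0 // invr_eq0.
    rewrite pmulr_rge0 // in hq.
    have -> : Hf A beta z v / 2 + 2 * H3 beta z v * t + (fobj A beta v - fobj A beta z) * t ^+ 2
      = r^+2 * (c ^+ 2 * (Hf A beta z v / 2) + 2 * c * s * H3 beta z v +
          s ^+ 2 * (fobj A beta v - fobj A beta z)) by rewrite /c /s; field.
    by rewrite mulr_ge0 // sqr_ge0.
  split.
    move=> v ht hv; have [h1 h2 h3] := key v ht hv; split; first lra.
    have e1 : (2 * H3 beta z v)^+2 = 4 * H3 beta z v ^+ 2 by ring.
    have e2 : 4 * (Hf A beta z v / 2) * (fobj A beta v - fobj A beta z)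
      = 2 * (Hf A beta z v * (fobj A beta v - fobj A beta z)) by field.
    rewrite e1 e2 in h3; lra.
  move=> v ht hv h0; have [h1 h2 h3] := key v ht hv.
  rewrite h0 mul0r mulr0 mul0r in h3.
  split; first by nra.
  rewrite (@DHf _ _ A beta z v hv) h0 add0r in h2; lra.
move=> [hi hii]; split => // w hw.
rewrite /on_sphere in hz hw.
set al := complex.Re (\sum_k (w k 0)^* * z k 0).
set u := w - al%:C *: z.
have hu : u = 1%:C *: w + (- al)%:C *: z.
  apply: cv_eq => i; rewrite !mxE; case: (w i 0) => a b; case: (z i 0) => e d.
  apply/eqP; rewrite eq_complex /=; apply/andP; split; apply/eqP; ring.
have hzz : complex.Re (\sum_k (z k 0)^* * z k 0) = 1.
  rewrite -hz /norm2sq raddf_sum; apply: eq_bigr => k _; case: (z k 0) => a b; rewrite /abs2 /=; ring.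
have htu : tangent z u.
  by rewrite /tangent hu tangent_comb hzz -/al; ring.
have hN : norm2sq u = 1 - al^+2.
  by rewrite hu norm2_comb hw hz ReSumJ -/al; ring.
have [hN0|hN0] := eqVneq (1 - al^+2) 0.
  have hu0 : u = 0 by apply: norm2_eq0; rewrite hN hN0.
  have hal : al^+2 = 1 by lra.
  have wdec : w = al%:C *: z + 0%:C *: u.
    rewrite hu0 scaler0 addr0; apply: cv_eq => i.
    have := congr1 (fun M : 'cV[R[i]]_n => M i 0) hu0; rewrite /u !mxE /=.
    by move/eqP; rewrite subr_eq0 => /eqP.
  by rewrite wdec (@f_scale _ _ A beta z u al hA hal).
have hNp : 0 < 1 - al^+2.
  rewrite lt_def hN0 -hN /=; apply: sumr_ge0 => k _; exact: addr_ge0 (sqr_ge0 _) (sqr_ge0 _).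
set r := Num.sqrt (1 - al^+2).
have hr2 : r^+2 = 1 - al^+2 by rewrite /r sqr_sqrtr //; exact: ltW.
have hr : 0 < r by rewrite /r sqrtr_gt0.
have rn0 : r != 0 by rewrite gt_eqF.
set v := 0%:C *: z + r^-1%:C *: u.
have htv : tangent z v.
  rewrite /tangent /v tangent_comb; rewrite /tangent in htu; rewrite htu; ring.
have hv : on_sphere v.
  rewrite /on_sphere /v norm2_comb hN -hr2; rewrite /tangent in htu; rewrite ReSumJ.
  have -> : complex.Re (\sum_k (z k 0)^* * u k 0) = 0 by rewrite ReSumJ.
  by field.
have wdec : w = al%:C *: z + r%:C *: v.
  apply: cv_eq => i; rewrite !mxE; case: (w i 0) => a b; case: (z i 0) => e d.
  apply/eqP; rewrite eq_complex /=; apply/andP; split; apply/eqP; field; exact: rn0.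
have hcs : al^+2 + r^+2 = 1 by rewrite hr2; ring.
have [hH hHD] := hi v htv hv.
have hD : 0 <= fobj A beta v - fobj A beta z.
  have [H0|Hn0] := eqVneq (Hf A beta z v) 0.
    have [_ h4] := hii v htv hv H0.
    rewrite (@DHf _ _ A beta z v hv) H0 add0r; lra.
  have Hp : 0 < Hf A beta z v by rewrite lt_def Hn0.
  have : 0 <= Hf A beta z v * (fobj A beta v - fobj A beta z).
    by apply: (le_trans _ hHD); apply: mulr_ge0 => //; exact: sqr_ge0.
  by move=> h; rewrite (pmulr_rge0 _ Hp) in h.
have hL := @L2 _ (Hf A beta z v / 2) (2 * H3 beta z v) (fobj A beta v - fobj A beta z) al r.
have hb2 : (2 * H3 beta z v)^+2 <= 4 * (Hf A beta z v / 2) * (fobj A beta v - fobj A beta z).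
  have e1 : (2 * H3 beta z v)^+2 = 4 * H3 beta z v ^+ 2 by ring.
  have e2 : 4 * (Hf A beta z v / 2) * (fobj A beta v - fobj A beta z)
    = 2 * (Hf A beta z v * (fobj A beta v - fobj A beta z)) by field.
  rewrite e1 e2; lra.
have hQ := hL ltac:(lra) hD hb2.
rewrite -subr_ge0 wdec (@Id _ _ A beta z v al r hA hs htv hv hcs).
apply: mulr_ge0; first exact: sqr_ge0.
move: hQ; congr (_ <= _); ring.
Qed.
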